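(* (a) There exist an absolute constant $C_0$ and, for every $n\ge1$, a deterministic exploration algorithm which, knowing only $n$ (and neither $k$ nor any bound on the period), solves PVG-Exploration of every feasible PV graph with distinct site identifiers and $n$ sites (homogeneous or heterogeneous, arbitrary routes), performing at most $C_0\,k\,p^2$ moves, where $k$ is the number of carriers and $p$ the period. (b) There exist an absolute constant $C_0$ and, for every $n\ge1$, a deterministic exploration algorithm which, knowing only $n$ and that the system is homogeneous, solves PVG-Exploration of every feasible homogeneous PV graph with distinct site identifiers and $n$ sites, performing at most $C_0\,k\,p$ moves.
   Context: A PV (periodically varying) system consists of a finite set $S$ of $n$ sites and a set $C$ of $k\le n$ carriers. Each carrier $c$ has a distinct identifier and a route $\pi(c)=\langle x_0,\dots,x_{p(c)-1}\rangle$, a finite sequence of sites (repetitions allowed) of length $p(c)\ge 1$ called its period; $\pi(c)[j]=x_{j \bmod p(c)}$. At each time $t\in\mathbb{N}$ carrier $c$ is at site $\pi(c)[t]$ and moves to $\pi(c)[t+1]$. The PV graph $\vec G_R$ is the directed edge-labelled multigraph on $S$ with edges $(x_i,x_{i+1},i)$, $0\le i<p(c)$, for every carrier. Its period is $p=\max_{c}p(c)$; it is homogeneous if all periods are equal, heterogeneous otherwise. In a system with ids the sites have distinct identifiers. An exploring agent is injected at time $0$ at a site of $\mathrm{start}(\vec G_R)=\{\pi(c)[0]:c\in C\}$. If at time $t$ the agent is at site $x$, it must either choose a carrier $c$ with $\pi(c)[t]=x$ and ride with it to $\pi(c)[t+1]$ (one move), or halt and exit; it cannot wait at a site. At each time the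 agent observes the identifiers of the carriers present at its current site and the identifier of that site. An exploration algorithm is a deterministic rule mapping the agent's a priori knowledge and history of observations to its next action. An algorithm solves PVG-Exploration of $\vec G_R$ if from every injection site the agent visits every site of $S$ and halts after finitely many moves. $\vec G_R$ is feasible if from the starting point of every carrier there exists a walk realizable by the agent (riding carriers and switching between carriers at the same site at the same time) visiting all sites. *)

(* Defs.v *)
From mathcomp Require Import all_boot.
Set Implicit Arguments. Unset Strict Implicit. Unset Printing Implicit Defensive.

Definition carrier := (nat * seq nat)%type.
Definition cid (c : carrier) : nat := c.1.
Definition route (c : carrier) : seq nat := c.2.

Record pvsys := PVSys { sites : seq nat; carriers : seq carrier }.

Definition cperiod (c : carrier) : nat := size (route c).

Definition cpos (c : carrier) (t : nat) : nat := nth 0 (route c) (t %% cperiod c).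

Definition wf_pvsys (G : pvsys) : Prop :=
  [/\ uniq (sites G), uniq (map cid (carriers G)),
      all (fun c => (0 < cperiod c) && all (fun x => x \in sites G) (route c)) (carriers G)
    & size (carriers G) <= size (sites G)].

Definition nsites (G : pvsys) : nat := size (sites G).
Definition ncarriers (G : pvsys) : nat := size (carriers G).

Definition period (G : pvsys) : nat := \max_(c <- carriers G) cperiod c.

Definition homogeneous (G : pvsys) : Prop :=
  forall c d, c \in carriers G -> d \in carriers G -> cperiod c = cperiod d.

Definition start (G : pvsys) : seq nat := [seq cpos c 0 | c <- carriers G].

(* identifiers of carriers present at site x at time t (as a sorted list,
   i.e. as a set of identifiers) *)
Definition present (G : pvsys) (t x : nat) : seq nat :=
  sort leq [seq cid c | c <- carriers G & cpos c t == x].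

Definition carrier_of (G : pvsys) (i : nat) : carrier :=
  nth (0, [::]) (carriers G) (find (fun c => cid c == i) (carriers G)).

Definition next_pos (G : pvsys) (i t : nat) : nat := cpos (carrier_of G i) t.+1.

(* Observation: (site identifier, identifiers of carriers present). *)
Definition obs := (nat * seq nat)%type.

(* Action: Some i = ride carrier i; None = halt and exit. An exploration
   algorithm (for a fixed a priori knowledge) maps histories of observations
   (time 0 .. current time) to actions. *)
Definition algorithm := seq obs -> option nat.

(* Execution: history of observations up to time t and current position,
   or None if the agent has stopped (halted or made an illegal choice) earlier. *)
Fixpoint run (G : pvsys) (A : algorithm) (x0 : nat) (t : nat)
  : option (seq obs * nat) :=
  match t with
  | 0 => Some ([:: (x0, present G 0 x0)], x0)
  | t'.+1 =>
    match run G A x0 t' with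
    | Some (h, x) =>
      match A h with
      | Some i => if i \in present G t' x then
                    let y := next_pos G i t' in Some (rcons h (y, present G t y), y)
                  else None
      | None => None
      end
    | None => None
    end
  end.

Definition explores_within (G : pvsys) (A : algorithm) (x0 bound : nat) : Prop :=
  exists T h x, [/\ run G A x0 T = Some (h, x), A h = None,
                    {subset sites G <= map fst h} & T <= bound].

Definition solves_within (G : pvsys) (A : algorithm) (bound : nat) : Prop :=
  forall x0, x0 \in start G -> explores_within G A x0 bound.

Fixpoint walk (G : pvsys) (t x : nat) (cs : seq nat) : option (seq nat) :=
  match cs with
  | [::] => Some [:: x]
  | i :: cs' => if i \in present G t x then
                  omap (cons x) (walk G t.+1 (next_pos G i t) cs')
                else None
  end.

Definition feasible (G : pvsys) : Prop :=
  forall c, c \in carriers G ->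
    exists cs vs, walk G 0 (cpos c 0) cs = Some vs /\ {subset sites G <= vs}.

(* Main.v *)
Require Import Defs.
From mathcomp Require Import all_boot.
From Stdlib Require Import Lia.
Set Implicit Arguments. Unset Strict Implicit. Unset Printing Implicit Defensive.

Ltac tolia := repeat match goal with
 | H : is_true (_ <= _) |- _ => apply (elimT leP) in H
 | H : is_true (_ < _) |- _ => apply (elimT ltP) in H
 | |- is_true (_ <= _) => apply/leP
 | |- is_true (_ < _) => apply/ltP
 end; change addn with Nat.add in *; change muln with Nat.mul in *; change subn with Nat.sub in *.

Definition ids (G : pvsys) := map cid (carriers G).
Definition pos (G : pvsys) (i t : nat) := cpos (carrier_of G i) t.
Definition per (G : pvsys) (i : nat) := cperiod (carrier_of G i).

Lemma uniq_map_inj (T U : eqType) (f : T -> U) (s : seq T) x y :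
  uniq (map f s) -> x \in s -> y \in s -> f x = f y -> x = y.
Proof.
elim: s => //= a s IH /andP[Ha Hu]; rewrite !inE => /orP[/eqP->|Hx] /orP[/eqP->|Hy] Hf //.
- by rewrite Hf map_f in Ha.
- by rewrite -Hf map_f in Ha.
- exact: IH.
Qed.

Lemma carrier_ofE G c : uniq (ids G) -> c \in carriers G -> carrier_of G (cid c) = c.
Proof.
move=> Hu Hc; rewrite /carrier_of.
have Hh : has (fun c' => cid c' == cid c) (carriers G) by apply/hasP; exists c.
apply: (uniq_map_inj Hu) => //; first by rewrite mem_nth // -has_find.
exact/eqP/(nth_find _ Hh).
Qed.

Lemma carrier_of_in G i : uniq (ids G) -> i \in ids G ->
  carrier_of G i \in carriers G /\ cid (carrier_of G i) = i.
Proof. by move=> Hu /mapP[c Hc ->]; rewrite carrier_ofE. Qed.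

Lemma mem_present G t x i : uniq (ids G) ->
  (i \in present G t x) = (i \in ids G) && (pos G i t == x).
Proof.
move=> Hu; rewrite /present mem_sort; apply/mapP/andP.
- case=> c; rewrite mem_filter => /andP[/eqP Hx Hc] ->; split; first exact: map_f.
  by rewrite /pos carrier_ofE // Hx.
- case=> Hi /eqP Hx; case/mapP: (Hi) => c Hc Ei; exists c => //.
  by rewrite mem_filter Hc andbT -Hx Ei /pos carrier_ofE.
Qed.

Lemma pos_mod G i t1 t2 d : per G i %| d -> t1 = t2 %[mod d] -> pos G i t1 = pos G i t2.
Proof.
move=> Hd Ht; rewrite /pos /cpos; congr nth.
by rewrite -(modn_dvdm t1 Hd) -(modn_dvdm t2 Hd) Ht.
Qed.

Lemma window L a r : 0 < L -> exists s, [/\ a <= s, s < a + L & s = r %[mod L]].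
Proof.
move=> HL.
have Ea := divn_eq a L; have Ha := ltn_pmod a HL; have Hr := ltn_pmod r HL.
set q := a %/ L in Ea *; set ra := a %% L in Ea Ha *; set rr := r %% L in Hr *.
case: (leqP ra rr) => Hc.
- exists (q * L + rr); split.
  + rewrite Ea; set m := q * L in Ea *; tolia; lia.
  + rewrite Ea; set m := q * L in Ea *; tolia; lia.
  + by rewrite modnMDl modn_mod.
- exists (q.+1 * L + rr); split.
  + rewrite Ea mulSn; set m := q * L in Ea *; tolia; lia.
  + rewrite Ea mulSn; set m := q * L in Ea *; tolia; lia.
  + by rewrite modnMDl modn_mod.
Qed.
Record st := St { gP : nat; vis : seq nat; stk : seq nat; cur : nat; rmode : bool; cnt : nat }.

Definition newguess s := St (2 * gP s) [:: cur s] [::] (cur s) false 0.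
Definition retstep s (pr : seq nat) (w : nat) :=
  match stk s with
  | [::] => newguess s
  | q :: stk' => if q \in pr then St (gP s) (vis s) stk' q false 0
                 else if w < gP s then St (gP s) (vis s) (stk s) (cur s) true w.+1
                 else newguess s
  end.
Definition dstep s (pr : seq nat) :=
  if rmode s then retstep s pr (cnt s) else
  match [seq d <- pr | d \notin vis s] with
  | d :: _ => St (gP s) (d :: vis s) (cur s :: stk s) d false 0
  | [::] => if cnt s < gP s then St (gP s) (vis s) (stk s) (cur s) false (cnt s).+1
            else retstep s pr 0
  end.
Definition init (pr : seq nat) := St 1 [:: head 0 pr] [::] (head 0 pr) false 0.
Definition Alg (n : nat) : algorithm := fun h =>
  match h with
  | [::] => None
  | o :: h' => if n <= size (undup (map fst h)) then None
               else Some (cur (foldl (fun s o => dstep s o.2) (init o.2) h'))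
  end.

Fixpoint sim G x0 t : st * nat :=
  match t with
  | 0 => (init (present G 0 x0), x0)
  | t'.+1 => let sx := sim G x0 t' in let y := pos G (cur sx.1) t'.+1 in
             (dstep sx.1 (present G t'.+1 y), y)
  end.
Definition S G x0 t := (sim G x0 t).1.
Definition X G x0 t := (sim G x0 t).2.
Fixpoint tl G x0 t : seq obs :=
  match t with
  | 0 => [::]
  | t'.+1 => rcons (tl G x0 t') (X G x0 t'.+1, present G t'.+1 (X G x0 t'.+1))
  end.
Definition hist G x0 t := (x0, present G 0 x0) :: tl G x0 t.

Lemma foldl_tl G x0 t :
  foldl (fun s o => dstep s o.2) (init (present G 0 x0)) (tl G x0 t) = S G x0 t.
Proof. by elim: t => //= t IH; rewrite foldl_rcons IH. Qed.

Lemma mem_hist G x0 t y : y \in map fst (hist G x0 t) -> exists2 u, u <= t & X G x0 u = y.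
Proof.
elim: t => [|t IH] /=; first by rewrite inE => /eqP ->; exists 0.
rewrite map_rcons -cats1 -cat_cons mem_cat mem_seq1 => /orP[/IH [u Hu <-]|/eqP ->].
- by exists u => //; apply: leqW.
- by exists t.+1.
Qed.

Lemma hist_mem G x0 t u : u <= t -> X G x0 u \in map fst (hist G x0 t).
Proof.
elim: t => [|t IH] Hu /=; first by move: Hu; rewrite leqn0 => /eqP ->; rewrite inE.
rewrite map_rcons -cats1 -cat_cons mem_cat mem_seq1; case: (ltnP u t.+1) => H.
- by rewrite IH.
- have -> : u = t.+1 by apply/eqP; rewrite eqn_leq Hu H.
  by rewrite eqxx orbT.
Qed.

Lemma run_sim G n x0 t :
  (forall u, u <= t -> cur (S G x0 u) \in present G u (X G x0 u)) ->
  (forall u, u < t -> ~~ (n <= size (undup (map fst (hist G x0 u))))) ->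
  run G (Alg n) x0 t = Some (hist G x0 t, X G x0 t).
Proof.
elim: t => [|t IH] Hl Hh //=.
rewrite IH; last 2 first.
- by move=> u Hu; apply: Hl; apply: leqW.
- by move=> u Hu; apply: Hh; apply: ltnW.
rewrite /Alg (negbTE (Hh t (ltnSn t))).
rewrite /hist /= foldl_tl.
have := Hl t (leqnSn t). rewrite /hist. move=> -> //.
Qed.
Definition clean G x0 (V : seq nat) v u :=
  X G x0 u = pos G v u /\ forall j, j \in ids G -> pos G j u = pos G v u -> j \in V.
Definition fin G x0 t P (V : seq nat) v :=
  exists a, a + P <= t /\ forall u, a <= u <= a + P -> clean G x0 V v u.
Definition meet G i j := exists t, pos G i t = pos G j t.
Fixpoint chain G c (s : seq nat) : Prop :=
  match s with [::] => True | q :: s' => meet G c q /\ chain G q s' end.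
Inductive conn G : nat -> nat -> Prop :=
 | conn0 i : conn G i i
 | connS i j k : j \in ids G -> meet G i j -> conn G j k -> conn G i k.
Definition allseen G x0 t := forall y, y \in sites G -> exists2 u, u <= t & X G x0 u = y.
Definition goodB G B := forall i j, i \in ids G -> j \in ids G ->
  exists L, [/\ 0 < L, per G i %| L, per G j %| L & L <= B].

Lemma clean_mono G x0 V V' v u : {subset V <= V'} -> clean G x0 V v u -> clean G x0 V' v u.
Proof. by move=> HV [H1 H2]; split => // j Hj Hp; apply/HV/H2. Qed.

Lemma fin_mono G x0 t t' P V V' v : t <= t' -> {subset V <= V'} ->
  fin G x0 t P V v -> fin G x0 t' P V' v.
Proof.
move=> Ht HV [a [Ha Hc]]; exists a; split; first exact: leq_trans Ha Ht.
by move=> u Hu; apply: clean_mono HV (Hc u Hu).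
Qed.

Lemma meet_recur G i j L a : 0 < L -> per G i %| L -> per G j %| L -> meet G i j ->
  exists u, [/\ a <= u, u < a + L & pos G i u = pos G j u].
Proof.
move=> HL Hi Hj [m Hm]; have [u [H1 H2 H3]] := window a m HL.
exists u; split => //; rewrite (pos_mod Hi H3) (pos_mod Hj H3) //.
Qed.

Lemma close1 G x0 t P V v j : goodB G P -> v \in ids G -> j \in ids G ->
  fin G x0 t P V v -> meet G v j -> j \in V.
Proof.
move=> HB Hv Hj [a [Ha Hc]] Hm.
have [L [HL Hdv Hdj HLB]] := HB v j Hv Hj.
have [u [H1 H2 H3]] := meet_recur a HL Hdv Hdj Hm.
have Hu : a <= u <= a + P by rewrite H1 /=; apply: leq_trans (ltnW H2) _; rewrite leq_add2l.
by have [_ Hcl] := Hc u Hu; apply: Hcl => //; rewrite H3.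
Qed.

Lemma site_fin G x0 t P V v u : goodB G P -> v \in ids G ->
  fin G x0 t P V v -> exists2 u', u' <= t & X G x0 u' = pos G v u.
Proof.
move=> HB Hv [a [Ha Hc]].
have [L [HL Hdv _ HLB]] := HB v v Hv Hv.
have [u' [H1 H2 H3]] := window a u HL.
have Hu : a <= u' <= a + P by rewrite H1 /=; apply: leq_trans (ltnW H2) _; rewrite leq_add2l.
exists u'; first by apply: leq_trans Ha; case/andP: Hu.
by have [-> _] := Hc u' Hu; apply: pos_mod Hdv H3.
Qed.

Lemma walk_sites G (V : seq nat) cs : uniq (ids G) ->
  (forall v j, v \in V -> j \in ids G -> meet G v j -> j \in V) ->
  forall t x vs i, i \in V -> pos G i t = x -> walk G t x cs = Some vs ->
  forall y, y \in vs -> exists2 j, j \in V & exists u, pos G j u = y.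
Proof.
move=> Hu Hcl; elim: cs => [|c cs IH] t x vs i Hi Hx /=.
- by case=> <- y; rewrite inE => /eqP ->; exists i => //; exists t.
- case: ifP => // Hc; case E: (walk G t.+1 (next_pos G c t) cs) => [vs'|] //= [<-] y.
  rewrite mem_present // in Hc; case/andP: Hc => Hc /eqP Hcx.
  have HcV : c \in V by apply: (Hcl i) => //; exists t; rewrite Hx Hcx.
  rewrite inE => /orP[/eqP ->|Hy]; first by exists i => //; exists t.
  exact: (IH _ _ _ _ HcV _ E).
Qed.

Lemma conn_in G (V : seq nat) i k :
  (forall v j, v \in V -> j \in ids G -> meet G v j -> j \in V) ->
  conn G i k -> i \in V -> k \in V.
Proof. move=> Hcl; elim=> // a b c Hb Hm _ IH Ha; apply: IH; exact: Hcl Ha Hb Hm. Qed.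

Lemma closure G x0 i0 t P V c : uniq (ids G) -> goodB G P ->
  {subset V <= ids G} -> (forall v, v \in V -> fin G x0 t P V v) ->
  c \in V -> conn G c i0 ->
  (exists cs vs, walk G 0 (pos G i0 0) cs = Some vs /\ {subset sites G <= vs}) ->
  allseen G x0 t.
Proof.
move=> Hu HB HV Hf Hc Hconn [cs [vs [Hw Hs]]].
have Hcl : forall v j, v \in V -> j \in ids G -> meet G v j -> j \in V.
  by move=> v j Hv Hj Hm; apply: (close1 HB (HV v Hv) Hj (Hf v Hv) Hm).
have Hi0 := conn_in Hcl Hconn Hc.
move=> y /Hs Hy.
have [j Hj [u <-]] := walk_sites Hu Hcl Hi0 (erefl _) Hw Hy.
exact: site_fin HB (HV j Hj) (Hf j Hj).
Qed.
Record Inv G x0 i0 B t (s : st) : Prop := {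
 iP : 0 < gP s; icnt : cnt s <= gP s; icur : cur s \in ids G; ivis : {subset vis s <= ids G};
 ivu : uniq (vis s); icv : cur s \in vis s; isv : {subset stk s <= vis s}; icu : uniq (cur s :: stk s);
 ipos : pos G (cur s) t = X G x0 t; ichain : chain G (cur s) (stk s); iconn : conn G (cur s) i0;
 ifin : forall v, v \in vis s -> v \notin cur s :: stk s -> fin G x0 t (gP s) (vis s) v;
 iscan : ~~ rmode s -> cnt s <= t.+1 /\
           (forall u, t.+1 - cnt s <= u <= t -> clean G x0 (vis s) (cur s) u);
 iret : rmode s -> [/\ fin G x0 t (gP s) (vis s) (cur s), 0 < cnt s, cnt s <= t.+1, stk s != [::] &
           forall u, t.+1 - cnt s <= u <= t -> pos G (head 0 (stk s)) u != pos G (cur s) u];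
 ibud : t + 10 * size (ids G) + (2 * gP s + 3) * (size (stk s) + 2) <=
        10 * size (ids G) * gP s + (2 * gP s + 3) * (2 * size (vis s)) +
        (if rmode s then gP s + cnt s else cnt s);
 iseen : gP s < 2 * B \/ allseen G x0 t }.

Lemma allseen_mono G x0 t t' : t <= t' -> allseen G x0 t -> allseen G x0 t'.
Proof. by move=> Ht H y Hy; have [u Hu <-] := H y Hy; exists u => //; apply: leq_trans Ht. Qed.

Lemma goodB_mono G B B' : B <= B' -> goodB G B -> goodB G B'.
Proof.
by move=> HB H i j Hi Hj; have [L [H1 H2 H3 H4]] := H i j Hi Hj; exists L; split => //; apply: leq_trans HB.
Qed.

Lemma ids_pos G i : i \in ids G -> 0 < size (ids G).
Proof. by case: (ids G). Qed.

Lemma inv0 G x0 i0 B : uniq (ids G) -> i0 \in ids G -> pos G i0 0 = x0 -> 0 < B ->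
  Inv G x0 i0 B 0 (S G x0 0).
Proof.
move=> Hu Hi0 Hx0 HB.
have Hin : i0 \in present G 0 x0 by rewrite mem_present // Hi0 Hx0 eqxx.
have Hh : head 0 (present G 0 x0) \in present G 0 x0.
  by move: Hin; case: (present G 0 x0) => //= a l _; rewrite mem_head.
rewrite mem_present // in Hh; case/andP: Hh => Hc /eqP Hcx.
rewrite /S /=; set c := head 0 _ in Hc Hcx *.
have Hk := ids_pos Hc.
constructor => //=.
all: try (by rewrite inE).
- by move=> v; rewrite inE => /eqP ->.
- by apply: (connS Hi0 _ (conn0 _ _)); exists 0; rewrite Hcx.
- by move=> v ->.
- move=> _; split => // u /andP[H1 H2]; exfalso; tolia; lia.
- by tolia; lia.
- by left; tolia; lia.
Qed.
Lemma inv_newguess G x0 i0 B t s mt : uniq (ids G) -> 0 < gP s -> cur s \in ids G ->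
  pos G (cur s) t.+1 = X G x0 t.+1 -> conn G (cur s) i0 -> size (vis s) <= size (ids G) ->
  t + 10 * size (ids G) + (2 * gP s + 3) * (size (stk s) + 2) <=
    10 * size (ids G) * gP s + (2 * gP s + 3) * (2 * size (vis s)) + mt ->
  mt <= 2 * gP s -> (gP s < B \/ allseen G x0 t.+1) -> Inv G x0 i0 B t.+1 (newguess s).
Proof.
move=> Hu HP Hc Hpos Hconn Hk Hbud Hmt Hseen.
have Hk0 := ids_pos Hc.
constructor => //=.
all: try (by rewrite inE).
- by rewrite muln_gt0 HP.
- by move=> v; rewrite inE => /eqP ->.
- by move=> v ->.
- move=> _; split => // u /andP[H1 H2]; exfalso; tolia; lia.
- move: Hbud; set k := size (ids G); set P := gP s; set a := size (vis s);
  set b := size (stk s) => Hbud; tolia; nia.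
- case: Hseen => [H|H]; [left | right] => //; tolia; lia.
Qed.

Lemma inv_pop G x0 i0 B t P V K' c q mt : uniq (ids G) -> 0 < P -> {subset V <= ids G} ->
  uniq V -> {subset q :: K' <= V} -> uniq (c :: q :: K') -> chain G c (q :: K') ->
  conn G c i0 -> c \in ids G ->
  (forall v, v \in V -> v \notin c :: q :: K' -> fin G x0 t P V v) -> fin G x0 t.+1 P V c ->
  q \in present G t.+1 (X G x0 t.+1) -> X G x0 t.+1 = pos G c t.+1 ->
  t + 10 * size (ids G) + (2 * P + 3) * (size (q :: K') + 2) <=
    10 * size (ids G) * P + (2 * P + 3) * (2 * size V) + mt -> mt <= 2 * P ->
  (P < 2 * B \/ allseen G x0 t) -> Inv G x0 i0 B t.+1 (St P V K' q false 0).
Proof.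
move=> Hu HP Hvis Hvu Hsv Hcu Hch Hconn Hc Hfin Hfc Hq HX Hbud Hmt Hseen.
rewrite mem_present // in Hq; case/andP: Hq => Hq /eqP Hqx.
constructor => //=.
- by apply: Hsv; rewrite mem_head.
- by move=> v Hv; apply: Hsv; rewrite inE Hv orbT.
- by case/andP: Hcu.
- by case: Hch.
- by apply: (connS Hc _ Hconn); exists t.+1; rewrite Hqx HX.
- move=> v Hv Hn; case: (eqVneq v c) => [->|Hvc] //.
  apply: fin_mono (Hfin v Hv _) => //; rewrite inE negb_or Hvc /=; exact: Hn.
- move=> _; split => // u /andP[H1 H2]; exfalso; tolia; lia.
- move: Hbud => /=; set k := size (ids G); set a := size V;
  set b := size K' => Hbud; tolia; nia.
- by case: Hseen => [H|H]; [left | right; apply: allseen_mono H].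
Qed.
Lemma inv_step G x0 i0 B t : uniq (ids G) -> goodB G B ->
  (exists cs vs, walk G 0 (pos G i0 0) cs = Some vs /\ {subset sites G <= vs}) ->
  Inv G x0 i0 B t (S G x0 t) -> Inv G x0 i0 B t.+1 (S G x0 t.+1).
Proof.
move=> Hu HB Hw I.
have HX : X G x0 t.+1 = pos G (cur (S G x0 t)) t.+1 by [].
have -> : S G x0 t.+1 = dstep (S G x0 t) (present G t.+1 (X G x0 t.+1)) by [].
move: (S G x0 t) I HX => [P V K c m w] I HX.
have Hk : size V <= size (ids G) := uniq_leq_size (ivu I) (ivis I).
case: I => /= HP Hcnt Hc Hvis Hvu Hcv Hsv Hcu Hpos Hch Hconn Hfin Hscan Hret Hbud Hseen.
rewrite /= in HX.
have Hpr j : (j \in present G t.+1 (X G x0 t.+1)) = (j \in ids G) && (pos G j t.+1 == pos G c t.+1).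
  by rewrite mem_present // HX.
rewrite /dstep /=.
case: m Hscan Hret Hbud => Hscan Hret Hbud.
-
  have [Hfc Hw0 Hwt HK Hnm] := Hret erefl.
  rewrite /retstep /=.
  clear Hret Hscan.
  case: K HK Hsv Hcu Hch Hfin Hnm Hbud => [//|q K'] _ Hsv Hcu Hch Hfin Hnm Hbud.
  have Hq0 : q \in ids G by apply/Hvis/Hsv; rewrite mem_head.
  case: ifP => Hq.
  + apply: (inv_pop (mt := P + w) (c := c)) => //; first exact: fin_mono Hfc.
    by tolia; lia.
  + have Hqn : pos G q t.+1 != pos G c t.+1 by move: Hq; rewrite Hpr Hq0 /= => ->.
    case: ifP => Hwl.
    * constructor => //=.
      -- by move=> v Hv Hn; apply: fin_mono (Hfin v Hv Hn).
      -- move=> _; split => //; first exact: fin_mono Hfc.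
         move=> u /andP[H1 H2]; case: (ltnP u t.+1) => H3.
         ++ by apply: Hnm; apply/andP; split; tolia; lia.
         ++ by have -> : u = t.+1 by tolia; lia.
      -- by move: Hbud => /= Hbud; tolia; nia.
      -- by case: Hseen => [H|H]; [left | right; apply: allseen_mono H].
    * have HwP : w = P by apply/eqP; rewrite eqn_leq Hcnt leqNgt Hwl.
      subst w.
      apply: (inv_newguess (mt := P + P) (s := St P V (q :: K') c true P)) => //=.
      -- by tolia; lia.
      -- left; case: (ltnP P B) => // HPB; exfalso.
         have [L [HL Hdc Hdq HLB]] := HB c q Hc Hq0.
         have [u [H1 H2 H3]] := meet_recur (t.+1 - P) HL Hdc Hdq Hch.1.
         case: (ltnP u t.+1) => H4.
         ++ suff Hr : t.+1 - P <= u <= t by move: (Hnm u Hr); rewrite H3 eqxx.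
            by apply/andP; split; tolia; lia.
         ++ have Hu1 : u = t.+1 by tolia; lia.
           by move: Hqn; rewrite -Hu1 H3 eqxx.
-
  have [Hwt Hcl] := Hscan erefl.
  case E: [seq d <- present G t.+1 (X G x0 t.+1) | d \notin V] => [|d l].
  + have Hclt : clean G x0 V c t.+1.
      split => // j Hj Hjp; apply/negPn/negP => Hjv.
      have : j \in [seq d <- present G t.+1 (X G x0 t.+1) | d \notin V].
        by rewrite mem_filter Hjv Hpr Hj Hjp eqxx.
      by rewrite E.
    case: ifP => Hwl.
    * constructor => //=.
      -- by move=> v Hv Hn; apply: fin_mono (Hfin v Hv Hn).
      -- move=> _; split => //.
         move=> u /andP[H1 H2]; case: (ltnP u t.+1) => H3.
         ++ by apply: Hcl; apply/andP; split; tolia; lia.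
         ++ by have -> : u = t.+1 by tolia; lia.
      -- by move: Hbud => /= Hbud; tolia; nia.
      -- by case: Hseen => [H|H]; [left | right; apply: allseen_mono H].
    * have HwP : w = P by apply/eqP; rewrite eqn_leq Hcnt leqNgt Hwl.
      subst w.
      have Hfc : fin G x0 t.+1 P V c.
        exists (t.+1 - P); split; first by tolia; lia.
        move=> u /andP[H1 H2]; case: (ltnP u t.+1) => H3.
        ++ by apply: Hcl; apply/andP; split; tolia; lia.
        ++ by have -> : u = t.+1 by tolia; lia.
      rewrite /retstep /=.
      clear Hret Hscan.
      case: K Hsv Hcu Hch Hfin Hbud => [|q K'] Hsv Hcu Hch Hfin Hbud.
      -- apply: (inv_newguess (mt := P) (s := St P V [::] c false P)) => //=.
         ++ by tolia; lia.
         ++ case: (ltnP P B) => HPB; [by left | right].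
            apply: (closure (c := c) Hu (goodB_mono HPB HB) Hvis _ Hcv Hconn Hw).
            move=> v Hv; case: (eqVneq v c) => [->|Hvc] //.
            by apply: fin_mono (Hfin v Hv _) => //; rewrite inE.
      -- have Hq0 : q \in ids G by apply/Hvis/Hsv; rewrite mem_head.
         case: ifP => Hq.
         ++ apply: (inv_pop (mt := P) (c := c)) => //; by tolia; lia.
         ++ have Hqn : pos G q t.+1 != pos G c t.+1 by move: Hq; rewrite Hpr Hq0 /= => ->.
            rewrite HP.
            constructor => //=.
            ** by move=> v Hv Hn; apply: fin_mono (Hfin v Hv Hn).
            ** move=> _; split => //.
               by move=> u /andP[H1 H2]; have -> : u = t.+1 by tolia; lia.
            ** by move: Hbud => /= Hbud; tolia; nia.
            ** by case: Hseen => [H|H]; [left | right; apply: allseen_mono H].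
  + have : d \in [seq d <- present G t.+1 (X G x0 t.+1) | d \notin V] by rewrite E mem_head.
    rewrite mem_filter Hpr => /andP[Hdv /andP[Hd /eqP Hdx]].
    constructor => //=.
    * by move=> v; rewrite inE => /orP[/eqP ->|/Hvis].
    * by rewrite Hdv Hvu.
    * by rewrite mem_head.
    * by move=> v; rewrite !inE => /orP[/eqP ->|/Hsv ->]; rewrite ?Hcv orbT.
    * rewrite Hcu andbT inE negb_or; apply/andP; split.
      -- by apply/eqP => Hdc; move: Hdv; rewrite Hdc Hcv.
      -- by apply/negP => /Hsv Hdk; move: Hdv; rewrite Hdk.
    * by rewrite Hdx HX.
    * by split => //; exists t.+1; rewrite Hdx.
    * by apply: (connS Hc _ Hconn); exists t.+1; rewrite Hdx.
    * move=> v; rewrite inE => /orP[/eqP ->|Hv]; first by rewrite mem_head.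
      rewrite inE negb_or => /andP[_ Hn]; apply: fin_mono (Hfin v Hv Hn) => //.
      by move=> z Hz; rewrite inE Hz orbT.
    * move=> _; split => // u /andP[H1 H2]; exfalso; tolia; lia.
    * move: Hbud => /=; set k := size (ids G); set a := size V;
      set b := size K => Hbud; tolia; nia.
    * by case: Hseen => [H|H]; [left | right; apply: allseen_mono H].
Qed.
Lemma inv_all G x0 i0 B t : uniq (ids G) -> goodB G B -> i0 \in ids G -> pos G i0 0 = x0 -> 0 < B ->
  (exists cs vs, walk G 0 (pos G i0 0) cs = Some vs /\ {subset sites G <= vs}) ->
  Inv G x0 i0 B t (S G x0 t).
Proof.
move=> Hu HB Hi0 Hx0 HB0 Hw; elim: t => [|t IH]; first exact: inv0.
exact: inv_step.
Qed.

Lemma pos_sites G i t : wf_pvsys G -> i \in ids G -> pos G i t \in sites G.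
Proof.
case=> _ Hu Hall _ Hi; have [Hc _] := carrier_of_in Hu Hi.
have /andP[Hp /allP Hr] := allP Hall _ Hc.
by apply: Hr; rewrite /pos /cpos mem_nth // ltn_pmod.
Qed.

Lemma core G n B x0 : wf_pvsys G -> nsites G = n -> feasible G -> goodB G B -> 0 < B ->
  x0 \in start G -> explores_within G (Alg n) x0 (44 * size (ids G) * B).
Proof.
move=> Hwf Hn Hfe HB HB0 /mapP[c0 Hc0 Hx0].
have Hu : uniq (ids G) by case: Hwf.
set i0 := cid c0.
have Hi0 : i0 \in ids G by apply: map_f.
have Hpi0 : pos G i0 0 = x0 by rewrite /pos carrier_ofE.
have Hw : exists cs vs, walk G 0 (pos G i0 0) cs = Some vs /\ {subset sites G <= vs}.
  by rewrite Hpi0 Hx0; apply: Hfe.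
have I t := inv_all t Hu HB Hi0 Hpi0 HB0 Hw.
have HXs u : X G x0 u \in sites G by rewrite -(ipos (I u)); apply: pos_sites => //; exact: icur (I u).
set k := size (ids G).
set T0 := 44 * k * B.
have Hk : 0 < k := ids_pos Hi0.
have HT0 : allseen G x0 T0.
  have [HP Hcnt _ Hvis Hvu _ _ _ _ _ _ _ _ _ Hbud Hseen] := I T0.
  case: Hseen => // HPB; exfalso.
  have Hv := uniq_leq_size Hvu Hvis.
  move: Hbud HPB Hv Hcnt HP; set P := gP _; set a := size (vis (S G x0 T0)); set b := size (stk (S G x0 T0)); set m := rmode _.
  set w := cnt _ => Hbud HPB Hv Hcnt HP.
  have Hmt : (if m then P + w else w) <= 2 * P by case: m Hbud => _; tolia; lia.
  have E1 : (2 * P + 3) * (2 * a) <= (2 * P + 3) * (2 * k) by rewrite leq_mul2l leq_mul2l Hv !orbT.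
  have E2 : (2 * P + 3) * (2 * k) = 4 * (k * P) + 6 * k.
    by tolia; nia.
  have E3 : k * P.+1 <= k * (2 * B) by rewrite leq_mul2l HPB orbT.
  have E4 : k * P.+1 = k * P + k by rewrite mulnS addnC.
  have E5 : 44 * k * B = 22 * (k * (2 * B)) by tolia; nia.
  have E6 : 10 * k * P = 10 * (k * P) by rewrite mulnA.
  have E7 : (2 * P + 3) * (b + 2) >= 2 * P + 3 by rewrite leq_pmulr // addn2.
  move: Hbud Hmt E1 E2 E3 E4 E5 E6 E7; rewrite /T0; set mt := (if m then _ else _).
  set kP := k * P; set kB := k * (2 * B); set Wb := (2 * P + 3) * (b + 2).
  set Wa := (2 * P + 3) * (2 * a); set Wk := (2 * P + 3) * (2 * k); set kP1 := k * P.+1.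
  move=> Hbud Hmt E1 E2 E3 E4 E5 E6 E7; rewrite E5 E6 in Hbud; tolia; lia.
pose H t := n <= size (undup (map fst (hist G x0 t))).
have HH0 : H T0.
  rewrite /H -Hn /nsites; apply: uniq_leq_size; first by case: Hwf.
  by move=> y /HT0 [u Hu' <-]; rewrite mem_undup; apply: hist_mem.
case: (ex_minnP (ex_intro H T0 HH0)) => T HT Hmin.
have HTle : T <= T0 := Hmin T0 HH0.
exists T, (hist G x0 T), (X G x0 T); split.
- apply: run_sim.
  + by move=> u _; rewrite mem_present // (icur (I u)) (ipos (I u)) eqxx.
  + by move=> u Hu'; apply/negP => Hh; move: (Hmin u Hh); rewrite leqNgt Hu'.
- by move: HT; rewrite /Alg /H /hist => ->.
- move=> y Hy.
  have Hs1 : {subset undup (map fst (hist G x0 T)) <= sites G}.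
    by move=> z; rewrite mem_undup => /mem_hist [u _ <-].
  have Hs2 : size (sites G) <= size (undup (map fst (hist G x0 T))).
    by move: HT; rewrite /H -Hn /nsites.
  have [_ Heq] := uniq_min_size (undup_uniq _) Hs1 Hs2.
  have Hsub : {subset sites G <= undup (map fst (hist G x0 T))} by move=> z; rewrite Heq.
  by rewrite -mem_undup; apply: Hsub.
- done.
Qed.
Lemma per_facts G i : wf_pvsys G -> i \in ids G -> 0 < per G i /\ per G i <= period G.
Proof.
move=> Hwf Hi; have Hu : uniq (ids G) by case: Hwf.
have [Hc _] := carrier_of_in Hu Hi.
split; last by rewrite /per /period (leq_bigmax_seq (P := predT) (F := cperiod) _ Hc).
by case: Hwf => _ _ Hall _; have /andP[Hp _] := allP Hall _ Hc.
Qed.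

Theorem mainTheorem10 :
  (exists C0 : nat, forall n : nat, 1 <= n ->
     exists A : algorithm, forall G : pvsys,
       wf_pvsys G -> nsites G = n -> feasible G ->
       solves_within G A (C0 * ncarriers G * period G ^ 2))
  /\
  (exists C0 : nat, forall n : nat, 1 <= n ->
     exists A : algorithm, forall G : pvsys,
       wf_pvsys G -> homogeneous G -> nsites G = n -> feasible G ->
       solves_within G A (C0 * ncarriers G * period G)).
Proof.
split.
- exists 44 => n _; exists (Alg n) => G Hwf HnG Hfe x0 Hx0.
  have [c0 Hc0 _] := mapP Hx0.
  have Hi0 : cid c0 \in ids G by apply: map_f.
  have [Hp0 Hpp] := per_facts Hwf Hi0.
  have := @core G n (period G ^ 2) x0 Hwf HnG Hfe.
  rewrite /ids size_map; move=> Hcore; apply: Hcore Hx0.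
  + move=> i j Hi Hj; exists (per G i * per G j).
    have [Hi1 Hi2] := per_facts Hwf Hi; have [Hj1 Hj2] := per_facts Hwf Hj.
    split; first by rewrite muln_gt0 Hi1.
    * exact: dvdn_mulr.
    * exact: dvdn_mull.
    * by rewrite -mulnn leq_mul.
  + by rewrite expn_gt0 (leq_trans Hp0 Hpp).
- exists 44 => n _; exists (Alg n) => G Hwf Hhom HnG Hfe x0 Hx0.
  have [c0 Hc0 _] := mapP Hx0.
  have Hi0 : cid c0 \in ids G by apply: map_f.
  have [Hp0 Hpp] := per_facts Hwf Hi0.
  have := @core G n (period G) x0 Hwf HnG Hfe.
  rewrite /ids size_map => Hcore; apply: Hcore Hx0; last exact: leq_trans Hp0 Hpp.
  move=> i j Hi Hj; exists (per G i).
  have Hu : uniq (ids G) by case: Hwf.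
  have [Hi1 Hi2] := per_facts Hwf Hi.
  have [Hci _] := carrier_of_in Hu Hi; have [Hcj _] := carrier_of_in Hu Hj.
  split => //; by rewrite /per (Hhom _ _ Hcj Hci).
Qed.
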